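(* Let $N\ge1$, let $G\subseteq\mathrm{GL}_2(\mathbb{Z}/N\mathbb{Z})$ be a subgroup with $-I\in G$ and $\det(G)=(\mathbb{Z}/N\mathbb{Z})^\times$, and let $k$ be a perfect field of characteristic not dividing $N$. Take $j\in k$ and an elliptic curve $E$ over $k$ with $j_E=j$. Let $M$ be the set of group isomorphisms $E[N]\to(\mathbb{Z}/N\mathbb{Z})^2$, with $G$ acting on the left and $\mathrm{Aut}(E_{\bar k})$ on the right by composition, and $\mathrm{Gal}_k$ acting by $(\sigma,\alpha)\mapsto\alpha\circ\sigma^{-1}$. Then the set $\{P\in Y_G(k):\pi_G(P)=j\}$ has the same cardinality as the subset of $G\backslash M/\mathrm{Aut}(E_{\bar k})$ fixed by the action of $\mathrm{Gal}_k$.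
   Context: $\mathrm{Gal}_k=\mathrm{Gal}(\bar k/k)$; for $\sigma\in\mathrm{Gal}_k$, $\sigma^{-1}$ acts on $E[N]\subseteq E(\bar k)$ by $P\mapsto\sigma^{-1}(P)$. $Y_G$ is the $\mathbb{Z}[1/N]$-scheme which is the coarse moduli space of the Deligne–Rapoport stack $\mathscr{M}^\circ_G[1/N]$ of elliptic curves with $G$-level structure: $Y_G(\bar k)$ is the set of isomorphism classes of pairs $(E,[\alpha]_G)$ with $E/\bar k$ an elliptic curve and $[\alpha]_G$ the orbit under $\alpha\mapsto g\circ\alpha$ ($g\in G$) of an isomorphism $\alpha\colon E[N]\to(\mathbb{Z}/N\mathbb{Z})^2$, two pairs being isomorphic if there is an isomorphism $\phi\colon E\to E'$ with $[\alpha]_G=[\alpha'\circ\phi]_G$. $\mathrm{Gal}_k$ acts by $\sigma\cdot(E,[\alpha]_G)=(E^\sigma,[\alpha\circ\sigma^{-1}]_G)$ and $Y_G(k)$ is the fixed set. $\pi_G\colon Y_G\to\mathbb{A}^1$ sends the class of $(E,[\alpha]_G)$ to $j_E$. *)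

(* Defs.v *)
From HB Require Import structures.
From mathcomp Require Import all_boot all_order all_algebra all_fingroup.
Set Implicit Arguments. Unset Strict Implicit. Unset Printing Implicit Defensive.
Import GRing.Theory.
Local Open Scope ring_scope.

Record wcurve (F : Type) := WC { wa1 : F; wa2 : F; wa3 : F; wa4 : F; wa6 : F }.

Section Weierstrass.
Variable F : fieldType.
Implicit Types (E : wcurve F) (x y : F).

Definition weq E x y : F :=
  y ^+ 2 + wa1 E * x * y + wa3 E * y
  - (x ^+ 3 + wa2 E * x ^+ 2 + wa4 E * x + wa6 E).

Definition wb2 E := wa1 E ^+ 2 + 4%:R * wa2 E.
Definition wb4 E := 2%:R * wa4 E + wa1 E * wa3 E.
Definition wb6 E := wa3 E ^+ 2 + 4%:R * wa6 E.
Definition wb8 E := wa1 E ^+ 2 * wa6 E + 4%:R * wa2 E * wa6 E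
  - wa1 E * wa3 E * wa4 E + wa2 E * wa3 E ^+ 2 - wa4 E ^+ 2.
Definition wc4 E := wb2 E ^+ 2 - 24%:R * wb4 E.
Definition disc E := - wb2 E ^+ 2 * wb8 E - 8%:R * wb4 E ^+ 3
  - 27%:R * wb6 E ^+ 2 + 9%:R * wb2 E * wb4 E * wb6 E.
Definition jinv E := wc4 E ^+ 3 / disc E.

(* points in projective Weierstrass model: None is the point at infinity O *)
Definition oncurve E (P : option (F * F)) : bool :=
  if P is Some (x, y) then weq E x y == 0 else true.

(* the chord-tangent group law (Silverman, III.2.3) *)
Definition wadd E (P Q : option (F * F)) : option (F * F) :=
  match P, Q with
  | None, _ => Q
  | _, None => P
  | Some (x1, y1), Some (x2, y2) =>
    if (x1 == x2) && (y1 + y2 + wa1 E * x2 + wa3 E == 0) then None else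
    let l := if x1 != x2 then (y2 - y1) / (x2 - x1)
             else (3%:R * x1 ^+ 2 + 2%:R * wa2 E * x1 + wa4 E - wa1 E * y1)
                  / (2%:R * y1 + wa1 E * x1 + wa3 E) in
    let nu := y1 - l * x1 in
    let x3 := l ^+ 2 + wa1 E * l - wa2 E - x1 - x2 in
    Some (x3, - (l + wa1 E) * x3 - nu - wa3 E)
  end.

Definition wmul E (m : nat) (P : option (F * F)) := iter m (wadd E P) None.

Definition in_tors E (N : nat) (P : option (F * F)) : bool :=
  oncurve E P && (wmul E N P == None).

(* Admissible change of variables x = u^2 x' + r, y = u^3 y' + s u^2 x' + t,
   transforming E into E' (the isomorphisms E -> E' of elliptic curves). *)
Definition chvar E E' (u r s t : F) : Prop :=
  u != 0 /\ forall x' y' : F,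
    weq E (u ^+ 2 * x' + r) (u ^+ 3 * y' + s * u ^+ 2 * x' + t)
    = u ^+ 6 * weq E' x' y'.

Definition chvar_pt (u r s t : F) (P : option (F * F)) : option (F * F) :=
  if P is Some (x, y) then
    Some ((x - r) / u ^+ 2, (y - s * (x - r) - t) / u ^+ 3)
  else None.

End Weierstrass.

Definition wmap (F F' : Type) (f : F -> F') (E : wcurve F) : wcurve F' :=
  WC (f (wa1 E)) (f (wa2 E)) (f (wa3 E)) (f (wa4 E)) (f (wa6 E)).
Definition ptmap (F F' : Type) (f : F -> F') (P : option (F * F)) :=
  if P is Some (x, y) then Some (f x, f y) else None.

(* (Z/NZ)^2 as the Z-module 'I_N * 'I_N ;  GL_2(Z/NZ) = Aut((Z/NZ)^2),
   realised as additive permutations of (Z/NZ)^2. *)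
Notation ZN2 n := ('I_n.+1 * 'I_n.+1)%type.

Definition is_GL2 n (g : {perm ZN2 n}) : bool :=
  [forall x : ZN2 n, forall y : ZN2 n, g (x + y) == g x + g y].

Definition e1 n : ZN2 n := (Zp1, 0).
Definition e2 n : ZN2 n := (0, Zp1).

(* determinant of the matrix with columns g e1, g e2, as an element of Z/NZ *)
Definition detN n (g : {perm ZN2 n}) : 'I_n.+1 :=
  let a := nat_of_ord (g (e1 n)).1 in let c := nat_of_ord (g (e1 n)).2 in
  let b := nat_of_ord (g (e2 n)).1 in let d := nat_of_ord (g (e2 n)).2 in
  inZp (a * d + (n.+1 * n.+1 - b * c))%N.

Section Level.
Variables (K : fieldType) (n : nat).

(* beta : (Z/NZ)^2 -> E(K) is the inverse of a group isomorphism
   alpha : E[N] -> (Z/NZ)^2 *)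
Definition levelstr (E : wcurve K) (beta : {ffun ZN2 n -> option (K * K)}) : Prop :=
  injective beta /\
  (forall a b, beta (a + b) = wadd E (beta a) (beta b)) /\
  (forall a, in_tors E n.+1 (beta a)) /\
  (forall P, in_tors E n.+1 P -> exists a, beta a = P).

Variable G : {group {perm ZN2 n}}.

(* (E, [alpha]_G) ~ (E', [alpha']_G) : exists phi : E -> E' with
   [alpha]_G = [alpha' o phi]_G;  in terms of beta = alpha^-1 *)
Definition pair_iso (X Y : wcurve K * {ffun ZN2 n -> option (K * K)}) : Prop :=
  exists u r s t, chvar X.1 Y.1 u r s t /\
    exists2 g, g \in G & forall a, Y.2 a = chvar_pt u r s t (X.2 (g a)).

(* G \ M / Aut(E) : beta ~ beta' ; (alpha |-> h o alpha o v) *)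
Definition dcoset_rel (E : wcurve K) (b b' : {ffun ZN2 n -> option (K * K)}) : Prop :=
  exists u r s t, chvar E E u r s t /\
    exists2 g, g \in G & forall a, b' a = chvar_pt u r s t (b (g a)).
End Level.

Definition perfect_field (k : fieldType) : Prop :=
  (forall p, p \in [pchar k] -> False) \/
  (exists2 p, p \in [pchar k] & forall x : k, exists y : k, y ^+ p = x).

(* Gal(Kbar / k) for an algebraic closure iota : k -> Kbar *)
Definition galk (k : fieldType) (K : fieldType) (iota : k -> K)
  (sigma : {rmorphism K -> K}) : Prop :=
  bijective sigma /\ forall a : k, sigma (iota a) = iota a.

Definition same_card (T1 T2 : Type) (A : T1 -> Prop) (B : T2 -> Prop) : Prop :=
  exists f : {x | A x} -> {y | B y}, bijective f.

(* Main.v *)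
Require Import Defs.
From Stdlib Require Import ClassicalEpsilon FunctionalExtensionality PropExtensionality ProofIrrelevance.
From HB Require Import structures.
From mathcomp Require Import all_boot all_order all_algebra all_fingroup.
From mathcomp Require Import ring.
Set Implicit Arguments. Unset Strict Implicit. Unset Printing Implicit Defensive.
Import GRing.Theory.
Local Open Scope ring_scope.

Section W.
Variable F : fieldType.
Implicit Types E : wcurve F.

Definition slope E x1 y1 x2 y2 : F :=
  if x1 != x2 then (y2 - y1) / (x2 - x1)
  else (3%:R * x1 ^+ 2 + 2%:R * wa2 E * x1 + wa4 E - wa1 E * y1)
       / (2%:R * y1 + wa1 E * x1 + wa3 E).
Definition res E x1 x2 y1 (l : F) : F * F :=
  (l ^+ 2 + wa1 E * l - wa2 E - x1 - x2,
   - (l + wa1 E) * (l ^+ 2 + wa1 E * l - wa2 E - x1 - x2) - (y1 - l * x1) - wa3 E).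

Lemma wadd_eq E x1 y1 x2 y2 :
  wadd E (Some (x1, y1)) (Some (x2, y2)) =
  if (x1 == x2) && (y1 + y2 + wa1 E * x2 + wa3 E == 0) then None
  else Some (res E x1 x2 y1 (slope E x1 y1 x2 y2)).
Proof. by []. Qed.

Lemma weq_same_x E x y1 y2 : weq E x y1 = 0 -> weq E x y2 = 0 ->
  y2 = y1 \/ y1 + y2 + wa1 E * x + wa3 E = 0.
Proof.
move=> h1 h2.
have: (y2 - y1) * (y1 + y2 + wa1 E * x + wa3 E) = 0.
  have -> : (y2 - y1) * (y1 + y2 + wa1 E * x + wa3 E) = weq E x y2 - weq E x y1.
    by rewrite /weq; ring.
  by rewrite h1 h2 subrr.
move/eqP; rewrite mulf_eq0 => /orP[/eqP|/eqP]; last by right.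
by move/subr0_eq; left.
Qed.

Lemma oncurve_add E P Q : oncurve E P -> oncurve E Q -> oncurve E (wadd E P Q).
Proof.
case: P => [[x1 y1]|] //; case: Q => [[x2 y2]|] // h1 h2.
rewrite wadd_eq; rewrite /= in h1 h2.
case: ifP => // hc /=.
move/eqP: h1 => h1; move/eqP: h2 => h2.
case: (eqVneq x1 x2) hc => [e12|n12] hc.
-
  subst x2; rewrite /= in hc.
  have [e|e] := weq_same_x h1 h2; last by rewrite e eqxx in hc.
  subst y2.
  have d0 : 2%:R * y1 + wa1 E * x1 + wa3 E != 0.
    have -> : 2%:R * y1 + wa1 E * x1 + wa3 E = y1 + y1 + wa1 E * x1 + wa3 E by ring.
    by rewrite hc.
  rewrite /slope eqxx /=.
  set D := 2%:R * y1 + wa1 E * x1 + wa3 E in d0 *.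
  set L := (_ / D).
  set nu := y1 - L * x1.
  set x3 := L ^+ 2 + wa1 E * L - wa2 E - x1 - x1.
  pose f x := weq E x (L * x + nu).
  pose h x := f x + (x - x1) * (x - x1) * (x - x3).
  have fx1 : f x1 = 0 by rewrite /f /nu -h1; congr weq; ring.
  have -> : weq E x3 (- (L + wa1 E) * x3 - (y1 - L * x1) - wa3 E) = f x3.
    by rewrite /f /weq /nu; ring.
  have hL : wa1 E * y1 - 3%:R * x1 ^+ 2 - 2%:R * wa2 E * x1 - wa4 E + L * D = 0.
    by rewrite /L divfK //; ring.
  have : h x3 = h x1 + (x3 - x1) * (wa1 E * y1 - 3%:R * x1 ^+ 2 - 2%:R * wa2 E * x1 - wa4 E + L * D).
    by rewrite /h /f /x3 /nu /D /weq; ring.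
  rewrite hL mulr0 addr0 /h fx1 /x3.
  by rewrite !(subrr, mulr0, mul0r, addr0) => ->.
-
  rewrite /slope n12 /=.
  set L := (y2 - y1) / (x2 - x1).
  set nu := y1 - L * x1.
  set x3 := L ^+ 2 + wa1 E * L - wa2 E - x1 - x2.
  pose f x := weq E x (L * x + nu).
  pose h x := f x + (x - x1) * (x - x2) * (x - x3).
  have fx1 : f x1 = 0 by rewrite /f /nu -h1; congr weq; ring.
  have -> : weq E x3 (- (L + wa1 E) * x3 - (y1 - L * x1) - wa3 E) = f x3.
    by rewrite /f /weq /nu; ring.
  have fx2 : f x2 = 0.
    rewrite /f /nu -h2; congr weq; rewrite /L.
    have hx : x2 - x1 != 0 by rewrite subr_eq0 eq_sym.
    by field.
  have : (x2 - x1) * h x3 = (x2 - x1) * h x1 + (x3 - x1) * (h x2 - h x1).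
    by rewrite /h /f /x3 /nu /weq; ring.
  rewrite /h fx1 fx2 !(subrr, mulr0, mul0r, addr0, add0r, subr0).
  move/eqP; rewrite mulf_eq0 subr_eq0 eq_sym (negPf n12) /=.
  by [].
Qed.
End W.

Section W2.
Variable F : fieldType.
Implicit Types E : wcurve F.

Definition tr E (u r s t : F) : wcurve F :=
  WC ((wa1 E + 2%:R * s) / u)
     ((wa2 E - s * wa1 E + 3%:R * r - s ^+ 2) / u ^+ 2)
     ((wa3 E + r * wa1 E + 2%:R * t) / u ^+ 3)
     ((wa4 E - s * wa3 E + 2%:R * r * wa2 E - (t + r * s) * wa1 E + 3%:R * r ^+ 2 - 2%:R * s * t) / u ^+ 4)
     ((wa6 E + r * wa4 E + r ^+ 2 * wa2 E + r ^+ 3 - t * wa3 E - t ^+ 2 - r * t * wa1 E) / u ^+ 6).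

Lemma chvar_tr E u r s t : u != 0 -> chvar E (tr E u r s t) u r s t.
Proof. by move=> u0; split => // x y; rewrite /weq /=; field. Qed.

Lemma tr_comp E u1 r1 s1 t1 u2 r2 s2 t2 : u1 != 0 -> u2 != 0 ->
  tr (tr E u1 r1 s1 t1) u2 r2 s2 t2 =
  tr E (u1 * u2) (r1 + u1 ^+ 2 * r2) (s1 + u1 * s2) (t1 + u1 ^+ 2 * s1 * r2 + u1 ^+ 3 * t2).
Proof. by move=> h1 h2; rewrite /tr /=; congr WC; field; rewrite h1 h2. Qed.

Lemma tr_id E : tr E 1 0 0 0 = E.
Proof. by case: E => a1 a2 a3 a4 a6; rewrite /tr /=; congr WC; field; rewrite ?oner_neq0. Qed.

Lemma chvar_pt_comp (u1 r1 s1 t1 u2 r2 s2 t2 : F) P : u1 != 0 -> u2 != 0 ->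
  chvar_pt u2 r2 s2 t2 (chvar_pt u1 r1 s1 t1 P) =
  chvar_pt (u1 * u2) (r1 + u1 ^+ 2 * r2) (s1 + u1 * s2) (t1 + u1 ^+ 2 * s1 * r2 + u1 ^+ 3 * t2) P.
Proof. by move=> h1 h2; case: P => [[x y]|] //=; congr (Some (_, _)); field; rewrite h1 h2. Qed.

Lemma chvar_pt_id (P : option (F * F)) : chvar_pt 1 0 0 0 P = P.
Proof. by case: P => [[x y]|] //=; congr (Some (_, _)); field; rewrite ?oner_neq0. Qed.

Definition Xc (u r : F) x := (x - r) / u ^+ 2.
Definition Yc (u r s t : F) x y := (y - s * (x - r) - t) / u ^+ 3.

Lemma Xc_eq u r x1 x2 : u != 0 -> (Xc u r x1 == Xc u r x2) = (x1 == x2).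
Proof.
move=> u0; apply/eqP/eqP => [h|->] //.
have u2 : u ^+ 2 != 0 by rewrite expf_neq0.
have : Xc u r x1 * u ^+ 2 + r = Xc u r x2 * u ^+ 2 + r by rewrite h.
by rewrite /Xc !divfK // !subrK.
Qed.

Lemma wadd_tr E u r s t P Q : u != 0 -> oncurve E P -> oncurve E Q ->
  chvar_pt u r s t (wadd E P Q) =
  wadd (tr E u r s t) (chvar_pt u r s t P) (chvar_pt u r s t Q).
Proof.
move=> u0.
case: P => [[x1 y1]|] //; case: Q => [[x2 y2]|] // h1 h2.
rewrite /chvar_pt -/(Xc u r x1) -/(Xc u r x2) -/(Yc u r s t x1 y1) -/(Yc u r s t x2 y2).
rewrite !wadd_eq Xc_eq //.
have res_tr : forall l, res (tr E u r s t) (Xc u r x1) (Xc u r x2) (Yc u r s t x1 y1)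
                ((l - s) / u) =
   (Xc u r (res E x1 x2 y1 l).1, Yc u r s t (res E x1 x2 y1 l).1 (res E x1 x2 y1 l).2).
  by move=> l; rewrite /res /Xc /Yc /=; congr (_, _); field; rewrite u0.
rewrite /= in h1 h2.
case: (eqVneq x1 x2) => [e12|n12] /=; last first.
  rewrite -res_tr; congr (Some (res _ _ _ _ _)).
  rewrite /slope Xc_eq // n12 /=.
  have hx : x2 - x1 != 0 by rewrite subr_eq0 eq_sym.
  have e : x2 - r - (x1 - r) = x2 - x1 by ring.
  by rewrite /Xc /Yc; field; rewrite e hx u0.
subst x2.
have -> : Yc u r s t x1 y1 + Yc u r s t x1 y2 + wa1 (tr E u r s t) * Xc u r x1
          + wa3 (tr E u r s t) = (y1 + y2 + wa1 E * x1 + wa3 E) / u ^+ 3.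
  by rewrite /Xc /Yc /=; field; rewrite u0.
rewrite mulf_eq0 invr_eq0 expf_eq0 (negPf u0) andbF orbF.
case: ifP => // hc.
rewrite (surjective_pairing (res E x1 x1 y1 _)) /= -res_tr; congr (Some (res _ _ _ _ _)).
have [e|e] := weq_same_x (eqP h1) (eqP h2); last by rewrite e eqxx in hc.
subst y2.
have d0 : 2%:R * y1 + wa1 E * x1 + wa3 E != 0.
  have -> : 2%:R * y1 + wa1 E * x1 + wa3 E = y1 + y1 + wa1 E * x1 + wa3 E by ring.
  by rewrite hc.
rewrite /slope !eqxx /=.
have -> : 2%:R * Yc u r s t x1 y1 + wa1 (tr E u r s t) * Xc u r x1 + wa3 (tr E u r s t)
    = (2%:R * y1 + wa1 E * x1 + wa3 E) / u ^+ 3.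
  by rewrite /Xc /Yc /=; field; rewrite u0.
set D := 2%:R * y1 + wa1 E * x1 + wa3 E in d0 *.
by rewrite /D /Xc /Yc /=; field; rewrite u0 -/D d0.
Qed.

Lemma oncurve_chvar E E' u r s t P : chvar E E' u r s t ->
  oncurve E' (chvar_pt u r s t P) = oncurve E P.
Proof.
case=> u0 H; case: P => [[x y]|] //=.
have := H ((x - r) / u ^+ 2) ((y - s * (x - r) - t) / u ^+ 3).
have -> : u ^+ 2 * ((x - r) / u ^+ 2) + r = x by field.
have -> : u ^+ 3 * ((y - s * (x - r) - t) / u ^+ 3) + s * u ^+ 2 * ((x - r) / u ^+ 2) + t = y by field.
move=> ->; by rewrite mulf_eq0 expf_eq0 (negPf u0) andbF.
Qed.

End W2.

Section W3.
Variable F : fieldType.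
Implicit Types E : wcurve F.

Lemma b2_tr E (u r s t : F) : u != 0 -> wb2 (tr E u r s t) = (wb2 E + 12%:R * r) / u ^+ 2.
Proof. by move=> u0; rewrite /wb2 /tr /=; field; rewrite u0. Qed.
Lemma b4_tr E (u r s t : F) : u != 0 ->
  wb4 (tr E u r s t) = (wb4 E + r * wb2 E + 6%:R * r ^+ 2) / u ^+ 4.
Proof. by move=> u0; rewrite /wb4 /wb2 /tr /=; field; rewrite u0. Qed.
Lemma b6_tr E (u r s t : F) : u != 0 ->
  wb6 (tr E u r s t) = (wb6 E + 2%:R * r * wb4 E + r ^+ 2 * wb2 E + 4%:R * r ^+ 3) / u ^+ 6.
Proof. by move=> u0; rewrite /wb6 /wb4 /wb2 /tr /=; field; rewrite u0. Qed.
Lemma b8_tr E (u r s t : F) : u != 0 ->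
  wb8 (tr E u r s t) = (wb8 E + 3%:R * r * wb6 E + 3%:R * r ^+ 2 * wb4 E + r ^+ 3 * wb2 E + 3%:R * r ^+ 4) / u ^+ 8.
Proof. by move=> u0; rewrite /wb8 /wb6 /wb4 /wb2 /tr /=; field; rewrite u0. Qed.

Lemma c4_tr E (u r s t : F) : u != 0 -> wc4 (tr E u r s t) = wc4 E / u ^+ 4.
Proof.
move=> u0; rewrite /wc4 b2_tr // b4_tr //.
by field; rewrite u0.
Qed.

Lemma disc_tr E (u r s t : F) : u != 0 -> disc (tr E u r s t) = disc E / u ^+ 12.
Proof.
move=> u0; rewrite /disc /wb2 /wb4 /wb6 /wb8 /tr /=.
by field; rewrite u0.
Qed.

Lemma jinv_tr E (u r s t : F) : u != 0 -> jinv (tr E u r s t) = jinv E.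
Proof.
move=> u0; rewrite /jinv c4_tr // disc_tr //.
have [->|d0] := eqVneq (disc E) 0; first by rewrite !mul0r !invr0 !mulr0.
by field; rewrite u0 d0.
Qed.
End W3.

Section W4.
Variable F : fieldType.
Implicit Types E : wcurve F.
Hypothesis hz : exists z : F, z != 0 /\ z != 1.

Lemma eq0_from (a b : F) : a - b = 0 -> a = b.
Proof. exact: subr0_eq. Qed.

Lemma weq_ext E1 E2 : (forall x y, weq E1 x y = weq E2 x y) -> E1 = E2.
Proof.
case: E1 => a1 a2 a3 a4 a6; case: E2 => b1 b2 b3 b4 b6 H.
pose D x y := weq (WC a1 a2 a3 a4 a6) x y - weq (WC b1 b2 b3 b4 b6) x y.
have HD : forall x y, D x y = 0 by move=> x y; rewrite /D H subrr.
have e6 : a6 = b6.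
  apply: eq0_from; have -> : a6 - b6 = - D 0 0 by rewrite /D /weq /=; ring.
  by rewrite HD oppr0.
have e3 : a3 = b3.
  apply: eq0_from; have -> : a3 - b3 = D 0 1 by rewrite /D /weq /= e6; ring.
  by rewrite HD.
have e1 : a1 = b1.
  apply: eq0_from; have -> : a1 - b1 = D 1 1 - D 1 0 by rewrite /D /weq /= e6 e3; ring.
  by rewrite !HD subrr.
have e24 : a4 - b4 = - (a2 - b2).
  apply: eq0_from; have -> : a4 - b4 - - (a2 - b2) = - D 1 0 by rewrite /D /weq /= e6 e3 e1; ring.
  by rewrite HD oppr0.
have [z [z0 z1]] := hz.
have e2 : a2 = b2.
  have : (a2 - b2) * (z * (z - 1)) = - D z 0.
    rewrite /D /weq /= e6 e3 e1.
    have -> : a4 = b4 - (a2 - b2) by rewrite -e24; ring.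
    ring.
  rewrite HD oppr0 => /eqP; rewrite mulf_eq0 mulf_eq0 !subr_eq0 (negPf z0) (negPf z1) /= orbF.
  by move/eqP.
have e4 : a4 = b4 by apply: eq0_from; rewrite e24 e2 subrr oppr0.
by rewrite e1 e2 e3 e4 e6.
Qed.

Lemma chvar_trE E E' (u r s t : F) : chvar E E' u r s t -> E' = tr E u r s t.
Proof.
move=> [u0 H]; have [_ H'] := chvar_tr E r s t u0.
apply: weq_ext => x y.
have u6 : u ^+ 6 != 0 by rewrite expf_neq0.
apply: (mulfI u6); by rewrite -H -H'.
Qed.

Definition pinvp (p : F * F * F * F) : F * F * F * F :=
  let: (u, r, s, t) := p in (u^-1, - r / u ^+ 2, - s / u, (r * s - t) / u ^+ 3).
Definition pcmp (p q : F * F * F * F) : F * F * F * F :=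
  let: (u1, r1, s1, t1) := p in let: (u2, r2, s2, t2) := q in
  (u1 * u2, r1 + u1 ^+ 2 * r2, s1 + u1 * s2, t1 + u1 ^+ 2 * s1 * r2 + u1 ^+ 3 * t2).

Definition chv E E' (p : F * F * F * F) := let: (u, r, s, t) := p in chvar E E' u r s t.
Definition cpt (p : F * F * F * F) P := let: (u, r, s, t) := p in chvar_pt u r s t P.
Definition trp E (p : F * F * F * F) := let: (u, r, s, t) := p in tr E u r s t.
Definition pu (p : F * F * F * F) := p.1.1.1.

Lemma chv_trp E E' p : chv E E' p -> E' = trp E p.
Proof. by case: p => [[[u r] s] t]; apply: chvar_trE. Qed.

Lemma chv_u E E' p : chv E E' p -> pu p != 0.
Proof. by case: p => [[[u r] s] t] []. Qed.

Lemma chv_trpI E p : pu p != 0 -> chv E (trp E p) p.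
Proof. by case: p => [[[u r] s] t] /= u0; apply: chvar_tr. Qed.

Lemma trp_comp E p q : pu p != 0 -> pu q != 0 -> trp (trp E p) q = trp E (pcmp p q).
Proof. by case: p => [[[u r] s] t]; case: q => [[[u' r'] s'] t'] /= h h'; apply: tr_comp. Qed.

Lemma pu_comp p q : pu p != 0 -> pu q != 0 -> pu (pcmp p q) != 0.
Proof. by case: p => [[[u r] s] t]; case: q => [[[u' r'] s'] t'] /= h h'; rewrite mulf_neq0. Qed.

Lemma pu_inv p : pu p != 0 -> pu (pinvp p) != 0.
Proof. by case: p => [[[u r] s] t] /= h; rewrite invr_eq0. Qed.

Lemma pcomp_inv p : pu p != 0 -> pcmp p (pinvp p) = (1, 0, 0, 0).
Proof.
case: p => [[[u r] s] t] /= h; congr (_, _, _, _); field; by rewrite h.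
Qed.

Lemma pcomp_invl p : pu p != 0 -> pcmp (pinvp p) p = (1, 0, 0, 0).
Proof.
case: p => [[[u r] s] t] /= h; congr (_, _, _, _); field; by rewrite h.
Qed.

Lemma trp_id E : trp E (1, 0, 0, 0) = E.
Proof. exact: tr_id. Qed.

Lemma cpt_comp p q P : pu p != 0 -> pu q != 0 -> cpt q (cpt p P) = cpt (pcmp p q) P.
Proof. by case: p => [[[u r] s] t]; case: q => [[[u' r'] s'] t'] /= h h'; apply: chvar_pt_comp. Qed.

Lemma cpt_id P : cpt (1, 0, 0, 0) P = P.
Proof. exact: chvar_pt_id. Qed.

Lemma chv_comp E1 E2 E3 p q : chv E1 E2 p -> chv E2 E3 q -> chv E1 E3 (pcmp p q).
Proof.
move=> h1 h2; have u1 := chv_u h1; have u2 := chv_u h2.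
rewrite (chv_trp h2) (chv_trp h1) trp_comp //.
by apply: chv_trpI; apply: pu_comp.
Qed.

Lemma chv_inv E1 E2 p : chv E1 E2 p -> chv E2 E1 (pinvp p).
Proof.
move=> h1; have u1 := chv_u h1.
have -> : E1 = trp E2 (pinvp p).
  by rewrite (chv_trp h1) trp_comp ?pu_inv // pcomp_inv // trp_id.
by apply: chv_trpI; apply: pu_inv.
Qed.

Lemma chv_id E : chv E E (1, 0, 0, 0).
Proof. by rewrite -{2}(trp_id E); apply: chv_trpI; rewrite /= oner_neq0. Qed.

Lemma cpt_inv p P : pu p != 0 -> cpt (pinvp p) (cpt p P) = P.
Proof. by move=> h; rewrite cpt_comp ?pu_inv // pcomp_inv // cpt_id. Qed.

Lemma cpt_invl p P : pu p != 0 -> cpt p (cpt (pinvp p) P) = P.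
Proof. by move=> h; rewrite cpt_comp ?pu_inv // pcomp_invl // cpt_id. Qed.

Lemma cpt_add E E' p P Q : chv E E' p -> oncurve E P -> oncurve E Q ->
  cpt p (wadd E P Q) = wadd E' (cpt p P) (cpt p Q).
Proof.
move=> h; rewrite (chv_trp h); have := chv_u h.
by case: p {h} => [[[u r] s] t] /= u0; apply: wadd_tr.
Qed.

Lemma cpt_oncurve E E' p P : chv E E' p -> oncurve E' (cpt p P) = oncurve E P.
Proof. by case: p => [[[u r] s] t] /=; apply: oncurve_chvar. Qed.

Lemma cpt_None p : cpt p None = None.
Proof. by case: p => [[[u r] s] t]. Qed.

Lemma cpt_inj p : pu p != 0 -> injective (cpt p).
Proof. by move=> h P Q e; rewrite -(cpt_inv P h) e cpt_inv. Qed.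

Lemma wmul_oncurve E m P : oncurve E P -> oncurve E (wmul E m P).
Proof. by move=> h; elim: m => //= m IH; apply: oncurve_add. Qed.

Lemma cpt_wmul E E' p m P : chv E E' p -> oncurve E P ->
  cpt p (wmul E m P) = wmul E' m (cpt p P).
Proof.
move=> h hP; elim: m => [|m IH] /=; first exact: cpt_None.
by rewrite (cpt_add h) // ?IH //; apply: wmul_oncurve.
Qed.

Lemma cpt_tors E E' p N P : chv E E' p -> in_tors E' N (cpt p P) = in_tors E N P.
Proof.
move=> h; rewrite /in_tors (cpt_oncurve P h).
case hP: (oncurve E P) => //=.
rewrite -(cpt_wmul _ h) //; apply/eqP/eqP => [e|->]; last exact: cpt_None.
by apply: (cpt_inj (chv_u h)); rewrite e cpt_None.
Qed.

End W4.

Section Roots.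
Variable K : closedFieldType.

Lemma rootn (n : nat) (c : K) : (0 < n)%N -> exists x : K, x ^+ n = c.
Proof.
move=> n0; have [x hx] := @solve_monicpoly K n (fun i => if i == 0%N then c else 0) n0.
exists x; rewrite hx (bigD1 (Ordinal n0)) //= big1 ?addr0 ?expr0 ?mulr1 //.
by move=> i; rewrite -val_eqE /= => /negPf ->; rewrite mul0r.
Qed.

Lemma rootn_nz (n : nat) (c : K) : (0 < n)%N -> c != 0 -> exists2 x : K, x ^+ n = c & x != 0.
Proof.
move=> n0 c0; have [x hx] := rootn c n0; exists x => //.
by apply: contraNneq c0 => x0; rewrite -hx x0 expr0n eqn0Ngt n0.
Qed.

Lemma root2 (c0 c1 : K) : exists x : K, x ^+ 2 = c0 + c1 * x.
Proof.
have [x hx] := @solve_monicpoly K 2 (nth 0 [:: c0; c1]) isT.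
by exists x; rewrite hx !big_ord_recl big_ord0 /= expr0 expr1 mulr1 addr0.
Qed.

Lemma root3 (c0 c1 c2 : K) : exists x : K, x ^+ 3 = c0 + c1 * x + c2 * x ^+ 2.
Proof.
have [x hx] := @solve_monicpoly K 3 (nth 0 [:: c0; c1; c2]) isT.
by exists x; rewrite hx !big_ord_recl big_ord0 /= expr0 expr1 mulr1 addr0 addrA.
Qed.

Lemma root4 (c0 c1 c2 c3 : K) : exists x : K, x ^+ 4 = c0 + c1 * x + c2 * x ^+ 2 + c3 * x ^+ 3.
Proof.
have [x hx] := @solve_monicpoly K 4 (nth 0 [:: c0; c1; c2; c3]) isT.
by exists x; rewrite hx !big_ord_recl big_ord0 /= expr0 expr1 mulr1 addr0 !addrA.
Qed.

Lemma exists_z : exists z : K, z != 0 /\ z != 1.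
Proof.
have [x hx] := root2 (-1) 1.
exists x; split; apply/eqP => e; move: hx; rewrite e.
- by rewrite expr0n /= mulr0 addr0 => /eqP; rewrite eq_sym oppr_eq0 oner_eq0.
- rewrite expr1n mulr1 addNr => /eqP; by rewrite oner_eq0.
Qed.

End Roots.

Lemma natr_modp (R : pzRingType) (p n : nat) : p%:R = 0 :> R -> n%:R = (n %% p)%:R :> R.
Proof. by move=> hp; rewrite {1}(divn_eq n p) natrD natrM hp mulr0 add0r. Qed.

Section Short.
Variable F : fieldType.
Implicit Types E : wcurve F.

Lemma tr_short E (u r : F) : 2%:R != 0 :> F -> u != 0 ->
  trp E (u, r, - wa1 E / 2%:R, - (wa3 E + r * wa1 E) / 2%:R) =
  WC 0 ((wb2 E / 4%:R + 3%:R * r) / u ^+ 2) 0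
     ((wb4 E / 2%:R + r * wb2 E / 2%:R + 3%:R * r ^+ 2) / u ^+ 4)
     ((wb6 E / 4%:R + r * wb4 E / 2%:R + r ^+ 2 * wb2 E / 4%:R + r ^+ 3) / u ^+ 6).
Proof.
move=> h2 u0.
have h4 : 4%:R != 0 :> F by rewrite (_ : 4 = 2 * 2)%N // natrM mulf_neq0.
by rewrite /trp /tr /wb2 /wb4 /wb6 /=; congr WC; field; rewrite ?h2 ?h4 ?u0.
Qed.

Lemma tr_char2 E (u r s t : F) : 2%:R = 0 :> F ->
  trp E (u, r, s, t) =
  WC (wa1 E / u) ((wa2 E - s * wa1 E + r - s ^+ 2) / u ^+ 2) ((wa3 E + r * wa1 E) / u ^+ 3)
     ((wa4 E - s * wa3 E - (t + r * s) * wa1 E + r ^+ 2) / u ^+ 4)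
     ((wa6 E + r * wa4 E + r ^+ 2 * wa2 E + r ^+ 3 - t * wa3 E - t ^+ 2 - r * t * wa1 E) / u ^+ 6).
Proof.
move=> h2.
have h3 : 3%:R = 1 :> F by rewrite (natrD _ 1 2) h2 addr0.
rewrite /trp /tr /= h2 h3 !mul0r !mul1r !addr0 !subr0.
by [].
Qed.

Lemma jinv_short (A B : F) :
  jinv (WC 0 0 0 A B) = (48%:R * A) ^+ 3 / (16%:R * (4%:R * A ^+ 3 + 27%:R * B ^+ 2)).
Proof.
rewrite /jinv /wc4 /disc /wb2 /wb4 /wb6 /wb8 /=.
have -> : (0 ^+ 2 + 4%:R * 0) ^+ 2 - 24%:R * (2%:R * A + 0 * 0) = - (48%:R * A) :> F by ring.
have -> : - (0 ^+ 2 + 4%:R * 0) ^+ 2 * (0 ^+ 2 * B + 4%:R * 0 * B - 0 * 0 * A + 0 * 0 ^+ 2 - A ^+ 2) -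
  8%:R * (2%:R * A + 0 * 0) ^+ 3 - 27%:R * (0 ^+ 2 + 4%:R * B) ^+ 2 +
  9%:R * (0 ^+ 2 + 4%:R * 0) * (2%:R * A + 0 * 0) * (0 ^+ 2 + 4%:R * B) =
  - (16%:R * (4%:R * A ^+ 3 + 27%:R * B ^+ 2)) :> F by ring.
by rewrite invrN; ring.
Qed.

End Short.

Lemma disc_trp (F : fieldType) (E : wcurve F) p : pu p != 0 -> disc (trp E p) = disc E / (pu p) ^+ 12.
Proof. by case: p => [[[u r] s] t] /= u0; apply: disc_tr. Qed.
Lemma jinv_trp (F : fieldType) (E : wcurve F) p : pu p != 0 -> jinv (trp E p) = jinv E.
Proof. by case: p => [[[u r] s] t] /= u0; apply: jinv_tr. Qed.
Lemma disc_trp_neq0 (F : fieldType) (E : wcurve F) p : pu p != 0 -> disc E != 0 -> disc (trp E p) != 0.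
Proof. by move=> h d; rewrite disc_trp // mulf_neq0 // invr_eq0 expf_neq0. Qed.

Lemma natr_mod (R : pzRingType) (p n : nat) : p%:R = 0 :> R -> n%:R = (n %% p)%:R :> R.
Proof. by move=> hp; rewrite {1}(divn_eq n p) natrD natrM hp mulr0 add0r. Qed.
Lemma natz0 (R : pzRingType) (p n : nat) : p%:R = 0 :> R -> (n %% p == 0)%N -> n%:R = 0 :> R.
Proof. by move=> hp /eqP h; rewrite (natr_mod n hp) h. Qed.
Lemma natz1 (R : pzRingType) (p n : nat) : p%:R = 0 :> R -> (n %% p == 1)%N -> n%:R = 1 :> R.
Proof. by move=> hp /eqP h; rewrite (natr_mod n hp) h. Qed.
Lemma natzm1 (R : pzRingType) (p n : nat) : p%:R = 0 :> R -> (n.+1 %% p == 0)%N -> n%:R = -1 :> R.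
Proof.
move=> hp h; have := natz0 hp h; rewrite -addn1 natrD => /eqP.
by rewrite addr_eq0 => /eqP.
Qed.

Lemma disc_WC1 (F : fieldType) (c : F) : disc (WC 1 0 0 0 c) = - c - 432%:R * c ^+ 2.
Proof. by rewrite /disc /wb2 /wb4 /wb6 /wb8 /=; ring. Qed.
Lemma jinv_WC1 (F : fieldType) (c : F) : jinv (WC 1 0 0 0 c) = (- c - 432%:R * c ^+ 2)^-1.
Proof.
rewrite /jinv disc_WC1 /wc4 /wb2 /wb4 /=.
have -> : (1 ^+ 2 + 4%:R * 0) ^+ 2 - 24%:R * (2%:R * 0 + 1 * 0) = 1 :> F by ring.
by rewrite expr1n mul1r.
Qed.

Section Char2.
Variable K : closedFieldType.
Hypothesis h2 : 2%:R = 0 :> K.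

Definition NF2 (j : K) := if j == 0 then WC 0 0 1 0 0 else WC 1 0 0 0 (- j^-1).

Lemma red2 (X : wcurve K) : disc X != 0 ->
  exists p, pu p != 0 /\ trp X p = NF2 (jinv X).
Proof.
move=> dX.
have [ha1|ha1] := eqVneq (wa1 X) 0.
- have j0 : jinv X = 0.
    rewrite /jinv /wc4 /wb2 /wb4 ha1 (@natz0 _ _ 4 h2) // (@natz0 _ _ 24 h2) //.
    set c := (X in X ^+ 3 / _); have -> : c = 0 by rewrite /c; ring.
    by rewrite expr0n /= mul0r.
  have ha3 : wa3 X != 0.
    apply: contraNneq dX => a30.
    rewrite /disc /wb2 /wb4 /wb6 /wb8 ha1 a30 (@natz0 _ _ 4 h2) // (@natz0 _ _ 8 h2) //.
    rewrite h2 (@natz1 _ _ 27 h2) // (@natz1 _ _ 9 h2) //.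
    by apply/eqP; ring.
  have [u hu u0] := rootn_nz (isT : (0 < 3)%N) ha3.
  have [s hs] := root4 (- wa4 X - wa2 X ^+ 2) (wa3 X) (2%:R * wa2 X) 0.
  pose r := s ^+ 2 - wa2 X.
  have [t ht] := root2 (wa6 X + r * wa4 X + r ^+ 2 * wa2 X + r ^+ 3) (- wa3 X).
  exists (u, r, s, t); split => //.
  rewrite tr_char2 // j0 /NF2 eqxx ha1; congr WC.
  - by rewrite mul0r.
  - by rewrite /r [X in X / _](_ : _ = 0) ?mul0r //; ring.
  - by rewrite mulr0 addr0 -hu divff // expf_neq0.
  - rewrite [X in X / _](_ : _ = s ^+ 4 - (- wa4 X - wa2 X ^+ 2 + wa3 X * s + 2%:R * wa2 X * s ^+ 2 + 0 * s ^+ 3)).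
      by rewrite hs subrr mul0r.
    by rewrite /r; ring.
  - rewrite [X in X / _](_ : _ = (wa6 X + r * wa4 X + r ^+ 2 * wa2 X + r ^+ 3 + - wa3 X * t) - t ^+ 2).
      by rewrite ht subrr mul0r.
    by ring.
- pose u := wa1 X; pose r := - wa3 X / wa1 X.
  have [s hs] := root2 (wa2 X + r) (- wa1 X).
  pose t := (wa4 X - s * wa3 X - r * s * wa1 X + r ^+ 2) / wa1 X.
  pose c := (wa6 X + r * wa4 X + r ^+ 2 * wa2 X + r ^+ 3 - t * wa3 X - t ^+ 2 - r * t * wa1 X) / u ^+ 6.
  have hT : trp X (u, r, s, t) = WC 1 0 0 0 c.
    rewrite tr_char2 //; congr WC.
    - by rewrite divff.
    - by rewrite [X in X / _](_ : _ = (wa2 X + r + - wa1 X * s) - s ^+ 2) ?hs ?subrr ?mul0r //; ring.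
    - by rewrite /r /u; field.
    - by rewrite /t /u; field.
  have jX : jinv X = (- c)^-1.
    rewrite -(jinv_trp X (p := (u, r, s, t)) ha1) hT jinv_WC1.
    by rewrite (@natz0 _ _ 432 h2) // mul0r subr0.
  have c0 : c != 0.
    have := disc_trp_neq0 (p := (u, r, s, t)) ha1 dX.
    rewrite hT disc_WC1 (@natz0 _ _ 432 h2) // mul0r subr0 oppr_eq0.
    by [].
  exists (u, r, s, t); split => //.
  rewrite hT /NF2 jX invr_eq0 oppr_eq0 (negPf c0) invrK opprK.
  by [].
Qed.
End Char2.

Lemma disc_WC01 (F : fieldType) (c : F) : disc (WC 0 1 0 0 c) = - 64%:R * c - 432%:R * c ^+ 2.
Proof. by rewrite /disc /wb2 /wb4 /wb6 /wb8 /=; ring. Qed.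
Lemma jinv_WC01 (F : fieldType) (c : F) :
  jinv (WC 0 1 0 0 c) = 16%:R ^+ 3 / (- 64%:R * c - 432%:R * c ^+ 2).
Proof.
rewrite /jinv disc_WC01 /wc4 /wb2 /wb4 /=.
by rewrite (_ : (0 ^+ 2 + 4%:R * 1) ^+ 2 - 24%:R * (2%:R * 0 + 0 * 0) = 16%:R :> F) //; ring.
Qed.

Section Char3.
Variable K : closedFieldType.
Hypothesis h3 : 3%:R = 0 :> K.

Definition NF3 (j : K) := if j == 0 then WC 0 0 0 1 0 else WC 0 1 0 0 (- j^-1).

Lemma two_nz3 : 2%:R != 0 :> K.
Proof.
apply/eqP => h; have : 1 = 3%:R - 2%:R :> K by ring.
by rewrite h h3 subrr; apply/eqP; rewrite oner_eq0.
Qed.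

Lemma red3 (X : wcurve K) : disc X != 0 ->
  exists p, pu p != 0 /\ trp X p = NF3 (jinv X).
Proof.
move=> dX; have h2 := two_nz3.
have h4 : 4%:R != 0 :> K by rewrite (_ : 4 = 2 * 2)%N // natrM mulf_neq0.
have [hb2|hb2] := eqVneq (wb2 X) 0.
- have j0 : jinv X = 0.
    rewrite /jinv /wc4 hb2 (@natz0 _ _ 24 h3) //.
    set c := (X in X ^+ 3 / _); have -> : c = 0 by rewrite /c; ring.
    by rewrite expr0n /= mul0r.
  have hb4 : wb4 X / 2%:R != 0.
    rewrite mulf_neq0 ?invr_eq0 //.
    apply: contraNneq dX => b40.
    rewrite /disc hb2 b40 (@natz0 _ _ 27 h3) //.
    by apply/eqP; ring.
  have [u hu u0] := rootn_nz (isT : (0 < 4)%N) hb4.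
  have [r hr] := root3 (- wb6 X / 4%:R) (- wb4 X / 2%:R) 0.
  exists (u, r, - wa1 X / 2%:R, - (wa3 X + r * wa1 X) / 2%:R); split => //.
  rewrite tr_short // j0 /NF3 eqxx; congr WC.
  - by rewrite hb2 h3; apply/eqP; rewrite mulf_eq0; apply/orP; left; apply/eqP; ring.
  - rewrite hb2 h3 hu; field; rewrite h2 /=.
    by move: hb4; rewrite mulf_eq0 invr_eq0 negb_or => /andP[].
  - apply/eqP; rewrite mulf_eq0; apply/orP; left; apply/eqP.
    by rewrite hr hb2; ring.
- have hb24 : wb2 X / 4%:R != 0 by rewrite mulf_neq0 ?invr_eq0.
  have [u hu u0] := rootn_nz (isT : (0 < 2)%N) hb24.
  pose r := - wb4 X / wb2 X.
  pose p := (u, r, - wa1 X / 2%:R, - (wa3 X + r * wa1 X) / 2%:R).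
  pose c := (wb6 X / 4%:R + r * wb4 X / 2%:R + r ^+ 2 * wb2 X / 4%:R + r ^+ 3) / u ^+ 6.
  have hT : trp X p = WC 0 1 0 0 c.
    rewrite /p tr_short //; congr WC.
    - by rewrite h3 mul0r addr0 hu divff.
    - apply/eqP; rewrite mulf_eq0; apply/orP; left; apply/eqP.
      by rewrite h3 /r; field; rewrite hb2 h2.
  have jX : jinv X = (- c)^-1.
    rewrite -(jinv_trp X (p := p) u0) hT jinv_WC01.
    rewrite (@natz1 _ _ 16 h3) // (@natz1 _ _ 64 h3) // (@natz0 _ _ 432 h3) //.
    by rewrite expr1n mul1r mul0r subr0 mulN1r.
  have c0 : c != 0.
    have := disc_trp_neq0 (p := p) u0 dX.
    rewrite hT disc_WC01 (@natz1 _ _ 64 h3) // (@natz0 _ _ 432 h3) // mul0r subr0 mulN1r oppr_eq0.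
    by [].
  exists p; split => //.
  rewrite hT /NF3 jX invr_eq0 oppr_eq0 (negPf c0) invrK opprK.
  by [].
Qed.
End Char3.

Lemma disc_short (F : fieldType) (A B : F) :
  disc (WC 0 0 0 A B) = - (16%:R * (4%:R * A ^+ 3 + 27%:R * B ^+ 2)).
Proof. by rewrite /disc /wb2 /wb4 /wb6 /wb8 /=; ring. Qed.

Lemma tr_scale (F : fieldType) (A B u : F) : u != 0 ->
  trp (WC 0 0 0 A B) (u, 0, 0, 0) = WC 0 0 0 (A / u ^+ 4) (B / u ^+ 6).
Proof. by move=> u0; rewrite /trp /tr /=; congr WC; field; rewrite u0. Qed.

Section Char5.
Variable K : closedFieldType.
Hypothesis h2 : 2%:R != 0 :> K.
Hypothesis h3 : 3%:R != 0 :> K.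

Lemma nz23 (a b : nat) : (2 ^ a * 3 ^ b)%:R != 0 :> K.
Proof. by rewrite natrM !natrX mulf_neq0 // expf_neq0. Qed.

Definition c5 (j : K) := 27%:R * j / (6912%:R - 4%:R * j).
Definition NF5 (j : K) :=
  if j == 0 then WC 0 0 0 0 1 else if j == 1728%:R then WC 0 0 0 1 0
  else WC 0 0 0 (c5 j) (c5 j).

Lemma red5 (X : wcurve K) : disc X != 0 ->
  exists p, pu p != 0 /\ trp X p = NF5 (jinv X).
Proof.
move=> dX.
have h4 : 4%:R != 0 :> K by rewrite (_ : 4 = 2 ^ 2 * 3 ^ 0)%N // nz23.
have h12 : 12%:R != 0 :> K by rewrite (_ : 12 = 2 ^ 2 * 3 ^ 1)%N // nz23.
have h16 : 16%:R != 0 :> K by rewrite (_ : 16 = 2 ^ 4 * 3 ^ 0)%N // nz23.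
have h27 : 27%:R != 0 :> K by rewrite (_ : 27 = 2 ^ 0 * 3 ^ 3)%N // nz23.
have h48 : 48%:R != 0 :> K by rewrite (_ : 48 = 2 ^ 4 * 3 ^ 1)%N // nz23.
have h1728 : 1728%:R != 0 :> K by rewrite (_ : 1728 = 2 ^ 6 * 3 ^ 3)%N // nz23.
pose r := - wb2 X / 12%:R.
pose p1 := (1 : K, r, - wa1 X / 2%:R, - (wa3 X + r * wa1 X) / 2%:R).
pose A := (wb4 X / 2%:R + r * wb2 X / 2%:R + 3%:R * r ^+ 2) / 1 ^+ 4.
pose B := (wb6 X / 4%:R + r * wb4 X / 2%:R + r ^+ 2 * wb2 X / 4%:R + r ^+ 3) / 1 ^+ 6.
have p10 : pu p1 != 0 by rewrite /= oner_neq0.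
have hS : trp X p1 = WC 0 0 0 A B.
  rewrite /p1 tr_short ?oner_neq0 //; congr WC.
  by rewrite /r; field; rewrite ?oner_neq0 ?h4 ?h12.
have dS : 4%:R * A ^+ 3 + 27%:R * B ^+ 2 != 0.
  have := disc_trp_neq0 p10 dX; rewrite hS disc_short oppr_eq0 mulf_eq0 negb_or.
  by case/andP.
have jS : jinv X = (48%:R * A) ^+ 3 / (16%:R * (4%:R * A ^+ 3 + 27%:R * B ^+ 2)).
  by rewrite -(jinv_trp X p10) hS jinv_short.
have comp : forall u, u != 0 -> trp X (pcmp p1 (u, 0, 0, 0)) = WC 0 0 0 (A / u ^+ 4) (B / u ^+ 6).
  by move=> u u0; rewrite -trp_comp // hS tr_scale.
have [A0|A0] := eqVneq A 0.
- have B0 : B != 0.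
    by apply: contraNneq dS => ->; rewrite A0; apply/eqP; ring.
  have [u hu u0] := rootn_nz (isT : (0 < 6)%N) B0.
  exists (pcmp p1 (u, 0, 0, 0)); split; first by apply: pu_comp.
  have z : (48%:R * 0 : K) ^+ 3 / (16%:R * (4%:R * 0 ^+ 3 + 27%:R * B ^+ 2)) = 0.
    by rewrite mulr0 exprS !mul0r.
  by rewrite comp // /NF5 jS A0 z eqxx hu divff // mul0r.
have [B0|B0] := eqVneq B 0.
- have [u hu u0] := rootn_nz (isT : (0 < 4)%N) A0.
  exists (pcmp p1 (u, 0, 0, 0)); split; first by apply: pu_comp.
  have j1728 : jinv X = 1728%:R.
    by rewrite jS B0; field; rewrite A0 h16 h4.
  rewrite comp // /NF5 j1728 (negPf h1728) eqxx hu divff // B0 mul0r.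
  by [].
have BA0 : B / A != 0 by rewrite mulf_neq0 ?invr_eq0.
have [u hu u0] := rootn_nz (isT : (0 < 2)%N) BA0.
exists (pcmp p1 (u, 0, 0, 0)); split; first by apply: pu_comp.
rewrite comp //.
have e4 : A / u ^+ 4 = A ^+ 3 / B ^+ 2.
  have e : u ^+ 4 = (B / A) ^+ 2 by rewrite -hu -exprM.
  by rewrite e; field; rewrite A0 B0.
have e6 : B / u ^+ 6 = A ^+ 3 / B ^+ 2.
  have e : u ^+ 6 = (B / A) ^+ 3 by rewrite -hu -exprM.
  by rewrite e; field; rewrite A0 B0.
rewrite e4 e6 /NF5.
have j0 : jinv X != 0.
  by rewrite jS; apply: mulf_neq0; [apply: expf_neq0; apply: mulf_neq0 | rewrite invr_eq0; apply: mulf_neq0].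
have j1 : jinv X != 1728%:R.
  apply/eqP => hj.
  have : B ^+ 2 * (1728%:R * 16%:R * 27%:R) = 1728%:R * (16%:R * (4%:R * A ^+ 3 + 27%:R * B ^+ 2))
     - jinv X * (16%:R * (4%:R * A ^+ 3 + 27%:R * B ^+ 2)).
    by rewrite jS divfK ?mulf_neq0 //; ring.
  rewrite hj subrr => /eqP; rewrite mulf_eq0 expf_eq0 (negPf B0) /=.
  by apply/negP; rewrite ?mulf_neq0.
rewrite (negPf j0) (negPf j1).
have -> : c5 (jinv X) = A ^+ 3 / B ^+ 2.
  have e : 6912%:R - 4%:R * jinv X = 6912%:R * 27%:R * B ^+ 2 / (4%:R * A ^+ 3 + 27%:R * B ^+ 2).
    by rewrite jS; field; rewrite dS h16.
  rewrite /c5 e jS.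
  have h6912 : 6912%:R != 0 :> K by rewrite (_ : 6912 = 2 ^ 8 * 3 ^ 3)%N // nz23.
  rewrite exprMn (_ : 48%:R ^+ 3 = 16%:R * 6912%:R :> K); last by rewrite -natrX -natrM.
  move: (6912%:R : K) h6912 => a ha.
  move: (27%:R : K) h27 dS => b hb dS.
  move: (16%:R : K) h16 => c hc.
  by field; rewrite dS ha hb hc B0.
by [].
Qed.
End Char5.

Section Classify.
Variable K : closedFieldType.

Definition NFall (j : K) :=
  if 2%:R == 0 :> K then NF2 j else if 3%:R == 0 :> K then NF3 j else NF5 j.

Lemma red_all (X : wcurve K) : disc X != 0 ->
  exists p, pu p != 0 /\ trp X p = NFall (jinv X).
Proof.
move=> dX; rewrite /NFall.
case: eqP => [h2|/eqP h2]; first exact: red2.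
case: eqP => [h3|/eqP h3]; first exact: red3.
exact: red5.
Qed.

Lemma classify (X Y : wcurve K) : disc X != 0 -> disc Y != 0 -> jinv X = jinv Y ->
  exists p, chv X Y p.
Proof.
move=> dX dY jXY.
have [p [p0 hp]] := red_all dX; have [q [q0 hq]] := red_all dY.
have hz := exists_z K.
have h1 : chv X (NFall (jinv X)) p by rewrite -hp; apply: chv_trpI.
have h2 : chv Y (NFall (jinv X)) q by rewrite jXY -hq; apply: chv_trpI.
exists (pcmp p (pinvp q)); apply: chv_comp h1 _ => //.
exact: chv_inv.
Qed.
End Classify.

Section Morph.
Variables (F F' : fieldType) (f : {rmorphism F -> F'}).

Lemma wmap_tr (E : wcurve F) u r s t :
  wmap f (tr E u r s t) = tr (wmap f E) (f u) (f r) (f s) (f t).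
Proof.
rewrite /tr /wmap /=; congr WC;
by rewrite !(fmorph_div, rmorph_nat, rmorphXn, rmorphB, rmorphD, rmorphM, rmorphN, fmorphV, rmorphXn).
Qed.

Lemma ptmap_chvar (u r s t : F) P :
  ptmap f (chvar_pt u r s t P) = chvar_pt (f u) (f r) (f s) (f t) (ptmap f P).
Proof.
case: P => [[x y]|] //=; congr (Some (_, _));
by rewrite !(fmorph_div, rmorph_nat, rmorphXn, rmorphB, rmorphD, rmorphM, rmorphN, fmorphV, rmorphXn).
Qed.

Lemma disc_wmap (E : wcurve F) : disc (wmap f E) = f (disc E).
Proof.
by rewrite /disc /wb2 /wb4 /wb6 /wb8 /wmap /=;
  rewrite !(fmorph_div, rmorph_nat, rmorphXn, rmorphB, rmorphD, rmorphM, rmorphN, fmorphV, rmorphXn).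
Qed.

Lemma jinv_wmap (E : wcurve F) : jinv (wmap f E) = f (jinv E).
Proof.
rewrite /jinv disc_wmap fmorph_div; congr (_ / _).
by rewrite /wc4 /wb2 /wb4 /wmap /=;
  rewrite !(fmorph_div, rmorph_nat, rmorphXn, rmorphB, rmorphD, rmorphM, rmorphN, fmorphV, rmorphXn).
Qed.
End Morph.

Section Level2.
Variables (n : nat) (G : {group {perm ZN2 n}}).
Hypothesis HGL : forall g, g \in G -> is_GL2 g.
Variable K : closedFieldType.

Notation pairT := (wcurve K * {ffun ZN2 n -> option (K * K)})%type.

Let hz := exists_z K.

Lemma iso_intro (X Y : pairT) p k : chv X.1 Y.1 p -> k \in G ->
  (forall a, Y.2 a = cpt p (X.2 (k a))) -> pair_iso G X Y.
Proof.
by case: p => [[[u r] s] t] /= h kG hk; exists u, r, s, t; split => //; exists k.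
Qed.

Lemma iso_elim (X Y : pairT) : pair_iso G X Y ->
  exists p k, [/\ chv X.1 Y.1 p, k \in G & forall a, Y.2 a = cpt p (X.2 (k a))].
Proof. by case=> u [r [s [t [h [k kG hk]]]]]; exists (u, r, s, t), k. Qed.

Lemma iso_refl (X : pairT) : pair_iso G X X.
Proof.
apply: (iso_intro (p := ((1 : K), (0 : K), (0 : K), (0 : K))) (k := 1%g)); first exact: chv_id.
  exact: group1.
by move=> a; rewrite perm1 cpt_id.
Qed.

Lemma iso_sym (X Y : pairT) : pair_iso G X Y -> pair_iso G Y X.
Proof.
case/iso_elim => p [k [hp kG hk]].
apply: (iso_intro (p := pinvp p) (k := k^-1%g)); first exact: chv_inv.
  by rewrite groupV.
by move=> a; rewrite hk permKV cpt_inv // (chv_u hp).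
Qed.

Lemma iso_trans (X Y Z : pairT) : pair_iso G X Y -> pair_iso G Y Z -> pair_iso G X Z.
Proof.
case/iso_elim => p [k [hp kG hk]]; case/iso_elim => q [h [hq hG hh]].
apply: (iso_intro (p := pcmp p q) (k := (h * k)%g)); first exact: chv_comp hp hq.
  by rewrite groupM.
by move=> a; rewrite hh hk cpt_comp ?(chv_u hp) ?(chv_u hq) // permM.
Qed.

Definition smap (sigma : {rmorphism K -> K}) (X : pairT) : pairT :=
  (wmap sigma X.1, [ffun a => ptmap sigma (X.2 a)]).

Lemma iso_map (sigma : {rmorphism K -> K}) (X Y : pairT) :
  pair_iso G X Y -> pair_iso G (smap sigma X) (smap sigma Y).
Proof.
case/iso_elim => p [k [hp kG hk]].
have u0 := chv_u hp; have eY := chv_trp hz hp.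
case: p hp hk u0 eY => [[[u r] s] t] hp hk /= u0 eY.
apply: (iso_intro (p := (sigma u, sigma r, sigma s, sigma t)) (k := k)) => //.
  rewrite /smap /= eY /= wmap_tr; apply: chvar_tr.
  by rewrite fmorph_eq0.
by move=> a; rewrite /smap /= !ffunE hk /= ptmap_chvar.
Qed.

Lemma iso_disc (X Y : pairT) : pair_iso G X Y -> disc X.1 != 0 -> disc Y.1 != 0.
Proof.
case/iso_elim => p [k [hp kG hk]] d.
by rewrite (chv_trp hz hp); apply: disc_trp_neq0 => //; apply: chv_u hp.
Qed.

Lemma iso_levelstr (X Y : pairT) : pair_iso G X Y -> levelstr X.1 X.2 -> levelstr Y.1 Y.2.
Proof.
case/iso_elim => p [k [hp kG hk]] [binj [badd [btor bsurj]]].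
have u0 := chv_u hp.
have hGL := HGL kG.
have kadd : forall x y, k (x + y) = k x + k y.
  by move=> x y; apply/eqP; move/forallP: hGL => /(_ x) /forallP /(_ y).
have onc : forall a, oncurve X.1 (X.2 a) by move=> a; case/andP: (btor a).
split; [|split; [|split]].
- move=> a c; rewrite !hk => /(cpt_inj u0) /binj; exact: perm_inj.
- by move=> a c; rewrite !hk kadd badd (cpt_add hz hp (onc _) (onc _)).
- by move=> a; rewrite hk (cpt_tors hz _ _ hp).
- move=> P hP.
  have hQ : in_tors X.1 n.+1 (cpt (pinvp p) P).
    by rewrite -(cpt_tors hz _ _ hp) cpt_invl.
  have [a0 ha0] := bsurj _ hQ.
  exists ((k^-1)%g a0); by rewrite hk permKV ha0 cpt_invl.
Qed.

End Level2.

Lemma sig_eqP (T : Type) (P : T -> Prop) (x y : {z | P z}) : proj1_sig x = proj1_sig y -> x = y.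
Proof.
case: x => a pa; case: y => b pb /= e; subst b.
by rewrite (proof_irrelevance _ pa pb).
Qed.

Lemma bij_of (T1 T2 : Type) (f : T1 -> T2) :
  injective f -> (forall y, exists x, f x = y) -> bijective f.
Proof.
move=> inj surj.
pose g y := proj1_sig (constructive_indefinite_description _ (surj y)).
have fg : cancel g f by move=> y; rewrite /g; case: constructive_indefinite_description.
by exists g => // x; apply: inj; rewrite fg.
Qed.

Section Main.
Variables (n : nat) (G : {group {perm ZN2 n}}).
Hypothesis HGL : forall g, g \in G -> is_GL2 g.
Variable K : closedFieldType.
Notation pairT := (wcurve K * {ffun ZN2 n -> option (K * K)})%type.

Lemma main_gen (E : wcurve K) (J : K) (Gal : {rmorphism K -> K} -> Prop)
  (dE : disc E != 0) (jE : jinv E = J) (fixE : forall s, Gal s -> wmap s E = E) :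
  same_card
    (fun C : pairT -> Prop =>
       exists X : pairT,
         [/\ disc X.1 != 0 /\ levelstr X.1 X.2,
             jinv X.1 = J,
             (forall sigma : {rmorphism K -> K}, Gal sigma ->
                pair_iso G (wmap sigma X.1, [ffun a => ptmap sigma (X.2 a)]) X) &
             C = (fun Y => (disc Y.1 != 0 /\ levelstr Y.1 Y.2) /\ pair_iso G X Y)])
    (fun C : {ffun ZN2 n -> option (K * K)} -> Prop =>
       exists b : {ffun ZN2 n -> option (K * K)},
         [/\ levelstr E b,
             (forall sigma : {rmorphism K -> K}, Gal sigma ->
                dcoset_rel G E [ffun a => ptmap sigma (b a)] b) &
             C = (fun b' => levelstr E b' /\ dcoset_rel G E b b')]).
Proof.
set LHS := (fun C : pairT -> Prop => _).
set RHS := (fun C : {ffun ZN2 n -> option (K * K)} -> Prop => _).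
pose V (Y : pairT) := disc Y.1 != 0 /\ levelstr Y.1 Y.2.
pose cls (X : pairT) := fun Y : pairT => V Y /\ pair_iso G X Y.
pose clsB (b : {ffun ZN2 n -> option (K * K)}) :=
  fun b' => levelstr E b' /\ dcoset_rel G E b b'.
have hz := exists_z K.
have cls_eq : forall X X', pair_iso G X X' -> cls X = cls X'.
  move=> X X' h; apply: functional_extensionality => Y.
  apply: propositional_extensionality; rewrite /cls; split => -[vY hY]; split => //.
    exact: iso_trans (iso_sym h) hY.
  exact: iso_trans h hY.
have clsB_eq : forall b b', pair_iso G (E, b) (E, b') -> clsB b = clsB b'.
  move=> b b' h; apply: functional_extensionality => c.
  apply: propositional_extensionality; rewrite /clsB; split => -[vY hY]; split => //.
    change (pair_iso G (E, b) (E, c)) in hY; change (pair_iso G (E, b') (E, c)).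
    exact: (iso_trans (iso_sym h) hY).
  change (pair_iso G (E, b') (E, c)) in hY; change (pair_iso G (E, b) (E, c)).
  exact: (iso_trans h hY).
pose Rel (x : {C | LHS C}) (y : {D | RHS D}) :=
  exists X b, [/\ proj1_sig x = cls X, V X, proj1_sig y = clsB b & pair_iso G X (E, b)].
have hex : forall x, exists y, Rel x y.
  case=> C [X [vX jX fX eC]].
  have [p hp] := classify vX.1 dE (etrans jX (esym jE)).
  pose b := [ffun a => cpt p (X.2 a)].
  have hXb : pair_iso G X (E, b).
    apply: (iso_intro (p := p) (k := 1%g)); [exact: hp | exact: group1 | ].
    by move=> a; rewrite ffunE perm1.
  have lb : levelstr E b := iso_levelstr HGL hXb vX.2.
  have hR : RHS (clsB b).
    exists b; split => // sigma hs.
    change (pair_iso G (E, [ffun a => ptmap sigma (b a)]) (E, b)).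
    have -> : (E, [ffun a => ptmap sigma (b a)]) = smap sigma (E, b) by rewrite /smap /= fixE.
    apply: iso_trans (iso_map sigma (iso_sym hXb)) _.
    exact: iso_trans (fX sigma hs) hXb.
  by exists (exist _ (clsB b) hR), X, b.
pose f x := proj1_sig (constructive_indefinite_description _ (hex x)).
have hf : forall x, Rel x (f x).
  by move=> x; rewrite /f; case: constructive_indefinite_description.
exists f; apply: bij_of.
- move=> x1 x2 e.
  have [X1 [b1 [e1 v1 f1 h1]]] := hf x1; have [X2 [b2 [e2 v2 f2 h2]]] := hf x2.
  apply: sig_eqP; rewrite e1 e2; apply: cls_eq.
  have lb1 : levelstr E b1 := iso_levelstr HGL h1 v1.2.
  have : clsB b1 b1 by split => //; change (pair_iso G (E, b1) (E, b1)); exact: iso_refl.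
  rewrite -f1 e f2 => -[_ h21]; change (pair_iso G (E, b2) (E, b1)) in h21.
  apply: iso_trans h1 _; apply: iso_trans (iso_sym h21) _.
  exact: iso_sym h2.
- case=> D [b [lb fb eD]].
  have vb : V (E, b) by split.
  have hL : LHS (cls (E, b)).
    exists (E, b); split => // sigma hs.
    have := fb sigma hs; rewrite /smap /=.
    change (pair_iso G (E, [ffun a => ptmap sigma (b a)]) (E, b) ->
            pair_iso G (wmap sigma E, [ffun a => ptmap sigma (b a)]) (E, b)).
    by rewrite fixE.
  exists (exist _ (cls (E, b)) hL); apply: sig_eqP => /=.
  have [X [b' [eX vX eb' hXb']]] := hf (exist _ (cls (E, b)) hL).
  rewrite eb' eD; apply: clsB_eq.
  have : cls X (E, b) by rewrite -eX /=; split => //; exact: iso_refl.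
  case=> _ hXb.
  exact: iso_trans (iso_sym hXb') hXb.
Qed.
End Main.

Unset Implicit Arguments.
Set Strict Implicit.

Theorem lemma3p3
  (n : nat) (G : {group {perm ZN2 n}})
  (HGL : forall g, g \in G -> is_GL2 g)
  (HmI : exists2 g, g \in G & forall a, g a = - a)
  (Hdet : forall u : 'I_n.+1, coprime u n.+1 -> exists2 g, g \in G & detN g = u)
  (k : fieldType) (Hperf : perfect_field k)
  (Hchar : forall p : nat, p \in [pchar k] -> ~~ (p %| n.+1)%N)
  (K : closedFieldType) (iota : {rmorphism k -> K})
  (Halg : forall x : K, exists2 p : {poly k}, p != 0 & root (map_poly iota p) x)
  (j : k) (E0 : wcurve k) (HE0 : disc E0 != 0) (HjE : jinv E0 = j) :
  let E := wmap iota E0 in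
  same_card
    (* { P in Y_G(k) : pi_G(P) = j } *)
    (fun C : wcurve K * {ffun ZN2 n -> option (K * K)} -> Prop =>
       exists X : wcurve K * {ffun ZN2 n -> option (K * K)},
         [/\ disc X.1 != 0 /\ levelstr X.1 X.2,
             jinv X.1 = iota j,
             (forall sigma : {rmorphism K -> K}, galk iota sigma ->
                pair_iso G (wmap sigma X.1, [ffun a => ptmap sigma (X.2 a)]) X) &
             C = (fun Y => (disc Y.1 != 0 /\ levelstr Y.1 Y.2) /\ pair_iso G X Y)])
    (* Gal_k-fixed elements of G \ M / Aut(E_kbar) *)
    (fun C : {ffun ZN2 n -> option (K * K)} -> Prop =>
       exists b : {ffun ZN2 n -> option (K * K)},
         [/\ levelstr E b,
             (forall sigma : {rmorphism K -> K}, galk iota sigma ->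
                dcoset_rel G E [ffun a => ptmap sigma (b a)] b) &
             C = (fun b' => levelstr E b' /\ dcoset_rel G E b b')]).
Proof.
move=> E.
have dE : disc E != 0 by rewrite /E disc_wmap fmorph_eq0.
have jE : jinv E = iota j by rewrite /E jinv_wmap HjE.
have fixE : forall s, galk iota s -> wmap s E = E.
  by move=> s [_ hs]; rewrite /E /wmap /= !hs.
exact: (main_gen HGL (Gal := galk iota) dE jE fixE).
Qed.
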